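(* Let $\omega\in(0,1]$, $a\in(0,1]$, $\hat R_*>0$, and fix $j\in\mathbb{N}$, $\varepsilon_j>0$, $d_j\in(0,1/4]$, $R_j\in(\hat R_*,1]$. Suppose that the stage-$j$ Hamiltonian $H^{(j)}=\omega pq+\eta+F^{(j)}(p,q,t)$ satisfies $\|F^{(j)}(p,q,t)\|_{R_j;\mathbb{R}^+}\le\varepsilon_je^{-at}$ for all $t\in\mathbb{R}^+$, and that $$\frac{4e^2\varepsilon_j}{\omega a\hat R_*^2d_j^6}\le\frac12.$$ Set $R_{j+1}:=(1-2d_j)R_j$ and $\varepsilon_{j+1}:=\dfrac{8e^2\varepsilon_j^2}{\omega a\hat R_*^2d_j^6}$. Then the stage-$(j+1)$ perturbation satisfies $\|F^{(j+1)}(p,q,t)\|_{R_{j+1};\mathbb{R}^+}\le\varepsilon_{j+1}e^{-at}$ for all $t\in\mathbb{R}^+$.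
   Context: $\mathbb{R}^+:=[0,\infty)$; multi-indices $\underline\alpha=(\alpha_1,\alpha_2)\in\mathbb{N}^2$, $|\underline\alpha|=\alpha_1+\alpha_2$. Time-dependent Taylor norm: $\|G\|_{\rho;\mathbb{R}^+}:=\sum_{\underline\alpha}|g_{\underline\alpha}(t)|\rho^{|\underline\alpha|}$ for $G=\sum g_{\underline\alpha}(t)p^{\alpha_1}q^{\alpha_2}$. $F^{(j)}=\sum_{\underline\alpha}f^{(j)}_{\underline\alpha}(t)p^{\alpha_1}q^{\alpha_2}$ is holomorphic in $(p,q)$ for $|p|,|q|<R_j$ with continuous coefficients. The generating function $\chi^{(j)}=\sum_{\underline\alpha}c_{\underline\alpha}(t)p^{\alpha_1}q^{\alpha_2}$ is defined by: for $\hat\lambda:=\omega(\alpha_1-\alpha_2)$, $c_{\underline\alpha}$ solves $\dot c_{\underline\alpha}+\hat\lambda c_{\underline\alpha}=f^{(j)}_{\underline\alpha}$ with $c_{\underline\alpha}(0)=0$ if $\hat\lambda>0$ and $c_{\underline\alpha}(0)=-\int_0^\infty e^{\hat\lambda s}f^{(j)}_{\underline\alpha}(s)ds$ if $\hat\lambda\le0$ (so that $\{\omega pq+\eta,\chi^{(j)}\}+F^{(j)}=0$). For functions independent of $\eta$, $\mathcal{L}_\chi G:=\{G,\chi\}=\partial_qG\,\partial_p\chi-\partial_pG\,\partial_q\chi$. The next stage is $H^{(j+1)}:=\exp(\mathcal{L}_{\chi^{(j)}})H^{(j)}=\omega pq+\eta+F^{(j+1)}$ with $F^{(j+1)}:=\sum_{s\ge1}\frac{s}{(s+1)!}\mathcal{L}^s_{\chi^{(j)}}F^{(j)}$.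 *)

(* Defs.v *)
From Stdlib Require Export Reals Factorial.
Open Scope R_scope.

(* A function G(p,q,t) = sum_{a,b} g_{a,b}(t) p^a q^b is represented by its
   coefficient family  g : nat -> nat -> R -> R,  g a b t = g_{(a,b)}(t). *)
Definition series := nat -> nat -> R -> R.

(* ||G||_{rho;R+} <= B at time t: the nonnegative double series
   sum_{a,b} |g_{a,b}(t)| rho^{a+b} converges with sum <= B, i.e. all its
   partial sums (grouped by total degree n = a+b) are <= B. *)
Definition normle (G : series) (rho B t : R) : Prop :=
  forall N : nat,
    sum_f_R0 (fun n => sum_f_R0 (fun k => Rabs (G k (n - k)%nat t) * rho ^ n) n) N
    <= B.

Definition cont_on_Rplus (f : R -> R) : Prop :=
  forall t, 0 <= t -> forall eps, 0 < eps -> exists del, 0 < del /\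
    forall s, 0 <= s -> Rabs (s - t) < del -> Rabs (f s - f t) < eps.

Definition coeffs_continuous (F : series) : Prop :=
  forall a b, cont_on_Rplus (F a b).

Definition improper_int0 (g : R -> R) (L : R) : Prop :=
  (forall T, 0 <= T -> exists pr : Riemann_integrable g 0 T, True) /\
  forall eps, 0 < eps -> exists T0, forall T, T0 <= T -> 0 <= T ->
    forall pr : Riemann_integrable g 0 T, Rabs (RiemannInt pr - L) < eps.

(* chi = sum c_{a,b}(t) p^a q^b is the generating function of F:
   with lam = omega (a - b), c solves  c' + lam c = f  on R+, with
   c(0) = 0 if lam > 0 and c(0) = - int_0^oo e^{lam s} f(s) ds if lam <= 0. *)
Definition is_gen_fun (omega : R) (F X : series) : Prop :=
  forall a b,
    let lam := omega * (INR a - INR b) in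
    (forall t, 0 < t -> derivable_pt_lim (X a b) t (F a b t - lam * X a b t)) /\
    cont_on_Rplus (X a b) /\
    (0 < lam -> X a b 0 = 0) /\
    (lam <= 0 -> improper_int0 (fun s => exp (lam * s) * F a b s) (- X a b 0)).

Definition dP (G : series) : series := fun a b t => INR (S a) * G (S a) b t.
Definition dQ (G : series) : series := fun a b t => INR (S b) * G a (S b) t.
Definition smul (P Q : series) : series := fun a b t =>
  sum_f_R0 (fun i => sum_f_R0 (fun k => P i k t * Q (a - i)%nat (b - k)%nat t) b) a.

Definition Lchi (X G : series) : series := fun a b t =>
  smul (dQ G) (dP X) a b t - smul (dP G) (dQ X) a b t.

Definition Lchi_pow (X : series) (s : nat) (G : series) : series :=
  Nat.iter s (Lchi X) G.

(* Main.v *)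
Require Import Defs.
From Stdlib Require Import Reals Factorial Lra Lia.
From Coquelicot Require Import Coquelicot.
Open Scope R_scope.

Lemma sum_nonneg (f : nat -> R) N : (forall i, (i <= N)%nat -> 0 <= f i) -> 0 <= sum_f_R0 f N.
Proof.
  induction N; intros H; simpl. apply H; lia.
  assert (0 <= f (S N)) by (apply H; lia).
  assert (0 <= sum_f_R0 f N) by (apply IHN; intros; apply H; lia). lra.
Qed.

Lemma sum_term_le (f : nat -> R) N i : (forall j, (j <= N)%nat -> 0 <= f j) -> (i <= N)%nat ->
  f i <= sum_f_R0 f N.
Proof.
  induction N; intros H Hi; simpl.
  - replace i with 0%nat by lia. lra.
  - destruct (Nat.eq_dec i (S N)) as [->|Hne].
    + assert (0 <= sum_f_R0 f N) by (apply sum_nonneg; intros; apply H; lia). lra.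
    + assert (f i <= sum_f_R0 f N) by (apply IHN; [intros; apply H; lia| lia]).
      assert (0 <= f (S N)) by (apply H; lia). lra.
Qed.

Lemma sum_mono_N (f : nat -> R) N M : (forall j, 0 <= f j) -> (N <= M)%nat ->
  sum_f_R0 f N <= sum_f_R0 f M.
Proof.
  intros H HNM. induction HNM. lra. simpl. specialize (H (S m)). lra.
Qed.

Lemma sum_shift_le (f : nat -> R) N : (forall j, 0 <= f j) ->
  sum_f_R0 (fun a => f (S a)) N <= sum_f_R0 f (S N).
Proof.
  intros H. rewrite (decomp_sum f (S N)) by lia. simpl pred. specialize (H 0%nat). lra.
Qed.

Lemma sum_swap (h : nat -> nat -> R) N M :
  sum_f_R0 (fun i => sum_f_R0 (fun j => h i j) M) N =
  sum_f_R0 (fun j => sum_f_R0 (fun i => h i j) N) M.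
Proof.
  induction N; simpl. reflexivity.
  rewrite IHN. rewrite <- plus_sum. reflexivity.
Qed.

Lemma sum_mult (f g : nat -> R) N M :
  sum_f_R0 f N * sum_f_R0 g M = sum_f_R0 (fun i => sum_f_R0 (fun j => f i * g j) M) N.
Proof.
  induction N; simpl.
  - rewrite scal_sum. apply sum_eq; intros; ring.
  - rewrite Rmult_plus_distr_r, IHN. f_equal. rewrite scal_sum. apply sum_eq; intros; ring.
Qed.

Lemma tri_eq (h : nat -> nat -> R) N :
  sum_f_R0 (fun n => sum_f_R0 (fun k => h k (n - k)%nat) n) N =
  sum_f_R0 (fun i => sum_f_R0 (fun j => h i j) (N - i)) N.
Proof.
  induction N.
  - simpl. reflexivity.
  - change (sum_f_R0 (fun n => sum_f_R0 (fun k => h k (n - k)%nat) n) (S N)) with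
      (sum_f_R0 (fun n => sum_f_R0 (fun k => h k (n - k)%nat) n) N +
       sum_f_R0 (fun k => h k (S N - k)%nat) (S N)).
    rewrite IHN.
    change (sum_f_R0 (fun i => sum_f_R0 (fun j => h i j) (S N - i)) (S N)) with
      (sum_f_R0 (fun i => sum_f_R0 (fun j => h i j) (S N - i)) N +
       sum_f_R0 (fun j => h (S N) j) (S N - S N)).
    change (sum_f_R0 (fun k => h k (S N - k)%nat) (S N)) with
      (sum_f_R0 (fun k => h k (S N - k)%nat) N + h (S N) (S N - S N)%nat).
    replace (S N - S N)%nat with 0%nat by lia. simpl (sum_f_R0 (fun j => h (S N) j) 0).
    assert (E : sum_f_R0 (fun i => sum_f_R0 (fun j => h i j) (S N - i)) N =
      sum_f_R0 (fun i => sum_f_R0 (fun j => h i j) (N - i)) N + sum_f_R0 (fun k => h k (S N - k)%nat) N).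
    { rewrite <- plus_sum. apply sum_eq. intros i Hi.
      replace (S N - i)%nat with (S (N - i)) by lia. simpl. reflexivity. }
    rewrite E. ring.
Qed.

Lemma tri_le (h : nat -> nat -> R) N : (forall i j, 0 <= h i j) ->
  sum_f_R0 (fun n => sum_f_R0 (fun k => h k (n - k)%nat) n) N <=
  sum_f_R0 (fun i => sum_f_R0 (fun j => h i j) N) N.
Proof.
  intros H. rewrite tri_eq. apply sum_Rle. intros i Hi. apply sum_mono_N. auto. lia.
Qed.

Definition rs (G : series) (rho t : R) (N : nat) :=
  sum_f_R0 (fun a => sum_f_R0 (fun b => Rabs (G a b t) * rho ^ a * rho ^ b) N) N.
Definition bnd (G : series) (rho t B : R) := forall N, rs G rho t N <= B.

Lemma term_nonneg (G : series) rho t a b : 0 <= rho -> 0 <= Rabs (G a b t) * rho ^ a * rho ^ b.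
Proof.
  intros. apply Rmult_le_pos; [apply Rmult_le_pos|]; try apply pow_le; auto; apply Rabs_pos.
Qed.

Lemma rs_nonneg (G : series) rho t N : 0 <= rho -> 0 <= rs G rho t N.
Proof. intros. unfold rs. apply sum_nonneg; intros. apply sum_nonneg; intros. now apply term_nonneg. Qed.

Lemma bnd_coef (G : series) rho t B a b : 0 <= rho -> bnd G rho t B ->
  Rabs (G a b t) * rho ^ a * rho ^ b <= B.
Proof.
  intros Hr H. specialize (H (max a b)). unfold rs in H.
  eapply Rle_trans; [|apply H].
  eapply Rle_trans; [|apply (sum_term_le _ _ a)].
  - apply (sum_term_le (fun b => Rabs (G a b t) * rho ^ a * rho ^ b)).
    intros; now apply term_nonneg. lia.
  - intros. apply sum_nonneg. intros; now apply term_nonneg.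
  - lia.
Qed.

Lemma geom_le y N : 0 <= y < 1 -> sum_f_R0 (fun i => y ^ i) N <= / (1 - y).
Proof.
  intros Hy. rewrite tech3 by lra. unfold Rdiv.
  rewrite <- (Rmult_1_l (/ (1 - y))) at 2.
  apply Rmult_le_compat_r. apply Rlt_le, Rinv_0_lt_compat; lra.
  assert (0 <= y ^ S N) by (apply pow_le; lra). lra.
Qed.

Lemma sum_geom_nonneg y N : 0 <= y -> 0 <= sum_f_R0 (fun i => y ^ i) N.
Proof. intros; apply sum_nonneg; intros; now apply pow_le. Qed.

Lemma bnd_of_coef (G : series) R y t C : 0 < R -> 0 <= y < 1 -> 0 <= C ->
  (forall a b, Rabs (G a b t) * R ^ a * R ^ b <= C) ->
  bnd G (y * R) t (C * (/ (1 - y) * / (1 - y))).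
Proof.
  intros HR Hy HC H N. unfold rs.
  apply Rle_trans with (sum_f_R0 (fun a => sum_f_R0 (fun b => C * (y ^ a * y ^ b)) N) N).
  - apply sum_Rle; intros a _. apply sum_Rle; intros b _.
    rewrite !Rpow_mult_distr.
    replace (Rabs (G a b t) * (y ^ a * R ^ a) * (y ^ b * R ^ b)) with
      ((Rabs (G a b t) * R ^ a * R ^ b) * (y ^ a * y ^ b)) by ring.
    apply Rmult_le_compat_r. apply Rmult_le_pos; apply pow_le; lra. apply H.
  - assert (E : sum_f_R0 (fun a => sum_f_R0 (fun b => C * (y ^ a * y ^ b)) N) N =
      C * (sum_f_R0 (fun i => y ^ i) N * sum_f_R0 (fun i => y ^ i) N)).
    { rewrite sum_mult, scal_sum. apply sum_eq; intros. rewrite Rmult_comm, scal_sum. apply sum_eq; intros; ring. }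
    rewrite E. apply Rmult_le_compat_l. lra.
    apply Rmult_le_compat; try apply sum_geom_nonneg; try lra; apply geom_le; lra.
Qed.

Lemma pow_diff_ineq r r' n : 0 <= r <= r' ->
  INR (S n) * r ^ n * (r' - r) <= r' ^ S n - r ^ S n.
Proof.
  intros Hr. induction n.
  - simpl. lra.
  - rewrite S_INR.
    assert (HA : r ^ S n <= r' ^ S n) by (apply pow_incr; lra).
    assert (0 <= r ^ S n) by (apply pow_le; lra).
    change (r ^ S n) with (r * r ^ n) in *. change (r' ^ S n) with (r' * r' ^ n) in *.
    change (r ^ S (S n)) with (r * (r * r ^ n)). change (r' ^ S (S n)) with (r' * (r' * r' ^ n)).
    assert (H1 : r * (INR (S n) * r ^ n * (r' - r)) <= r * (r' * r' ^ n - r * r ^ n))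
      by (apply Rmult_le_compat_l; lra).
    assert (H2 : (r' - r) * (r * r ^ n) <= (r' - r) * (r' * r' ^ n)) by (apply Rmult_le_compat_l; lra).
    rewrite S_INR in H1. nra.
Qed.

Lemma cauchy_factor r r' n : 0 <= r < r' ->
  INR (S n) * r ^ n <= r' ^ S n * / (r' - r).
Proof.
  intros Hr. assert (H := pow_diff_ineq r r' n ltac:(lra)).
  assert (0 <= r ^ S n) by (apply pow_le; lra).
  apply Rmult_le_reg_r with (r' - r). lra.
  replace (r' ^ S n * / (r' - r) * (r' - r)) with (r' ^ S n) by (field; lra). lra.
Qed.

Lemma bnd_dP G rho rho' t B : 0 <= rho < rho' -> bnd G rho' t B ->
  bnd (dP G) rho t (B * / (rho' - rho)).
Proof.
  intros Hr H N. unfold rs, dP.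
  apply Rle_trans with (sum_f_R0 (fun a => sum_f_R0 (fun b =>
     (Rabs (G (S a) b t) * rho' ^ S a * rho' ^ b) * / (rho' - rho)) N) N).
  - apply sum_Rle; intros a _. apply sum_Rle; intros b _.
    rewrite Rabs_mult, Rabs_right by (apply Rle_ge, pos_INR).
    assert (Hc := cauchy_factor rho rho' a Hr).
    assert (Hb : rho ^ b <= rho' ^ b) by (apply pow_incr; lra).
    assert (0 <= rho ^ b) by (apply pow_le; lra).
    assert (0 <= Rabs (G (S a) b t)) by apply Rabs_pos.
    assert (0 <= INR (S a) * rho ^ a) by (apply Rmult_le_pos; [apply pos_INR| apply pow_le; lra]).
    replace (INR (S a) * Rabs (G (S a) b t) * rho ^ a * rho ^ b) with
      (Rabs (G (S a) b t) * (INR (S a) * rho ^ a) * rho ^ b) by ring.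
    replace (Rabs (G (S a) b t) * rho' ^ S a * rho' ^ b * / (rho' - rho)) with
      (Rabs (G (S a) b t) * (rho' ^ S a * / (rho' - rho)) * rho' ^ b) by ring.
    apply Rmult_le_compat; try nra. 
  - assert (E : sum_f_R0 (fun a => sum_f_R0 (fun b =>
       (Rabs (G (S a) b t) * rho' ^ S a * rho' ^ b) * / (rho' - rho)) N) N =
       / (rho' - rho) * sum_f_R0 (fun a => sum_f_R0 (fun b =>
       (Rabs (G (S a) b t) * rho' ^ S a * rho' ^ b)) N) N).
    { rewrite scal_sum. apply sum_eq; intros. rewrite Rmult_comm, scal_sum. apply sum_eq; intros; ring. }
    rewrite E, Rmult_comm. apply Rmult_le_compat_r. apply Rlt_le, Rinv_0_lt_compat; lra.
    eapply Rle_trans; [|apply (H (S N))]. unfold rs.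
    eapply Rle_trans.
    + apply sum_Rle. intros a _. apply (sum_mono_N _ N (S N)). intros; apply term_nonneg; lra. lia.
    + apply (sum_shift_le (fun a => sum_f_R0 (fun b => Rabs (G a b t) * rho' ^ a * rho' ^ b) (S N))).
      intros. apply sum_nonneg; intros; apply term_nonneg; lra.
Qed.

Lemma bnd_dQ G rho rho' t B : 0 <= rho < rho' -> bnd G rho' t B ->
  bnd (dQ G) rho t (B * / (rho' - rho)).
Proof.
  intros Hr H N. unfold rs, dQ.
  apply Rle_trans with (sum_f_R0 (fun a => sum_f_R0 (fun b =>
     (Rabs (G a (S b) t) * rho' ^ a * rho' ^ S b) * / (rho' - rho)) N) N).
  - apply sum_Rle; intros a _. apply sum_Rle; intros b _.
    rewrite Rabs_mult, Rabs_right by (apply Rle_ge, pos_INR).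
    assert (Hc := cauchy_factor rho rho' b Hr).
    assert (Hb : rho ^ a <= rho' ^ a) by (apply pow_incr; lra).
    assert (0 <= rho ^ a) by (apply pow_le; lra).
    assert (0 <= Rabs (G a (S b) t)) by apply Rabs_pos.
    assert (0 <= INR (S b) * rho ^ b) by (apply Rmult_le_pos; [apply pos_INR| apply pow_le; lra]).
    replace (INR (S b) * Rabs (G a (S b) t) * rho ^ a * rho ^ b) with
      (Rabs (G a (S b) t) * rho ^ a * (INR (S b) * rho ^ b)) by ring.
    replace (Rabs (G a (S b) t) * rho' ^ a * rho' ^ S b * / (rho' - rho)) with
      (Rabs (G a (S b) t) * rho' ^ a * (rho' ^ S b * / (rho' - rho))) by ring.
    apply Rmult_le_compat; try nra. 
  - assert (E : sum_f_R0 (fun a => sum_f_R0 (fun b =>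
       (Rabs (G a (S b) t) * rho' ^ a * rho' ^ S b) * / (rho' - rho)) N) N =
       / (rho' - rho) * sum_f_R0 (fun a => sum_f_R0 (fun b =>
       (Rabs (G a (S b) t) * rho' ^ a * rho' ^ S b)) N) N).
    { rewrite scal_sum. apply sum_eq; intros. rewrite Rmult_comm, scal_sum. apply sum_eq; intros; ring. }
    rewrite E, Rmult_comm. apply Rmult_le_compat_r. apply Rlt_le, Rinv_0_lt_compat; lra.
    eapply Rle_trans; [|apply (H (S N))]. unfold rs.
    eapply Rle_trans.
    + apply sum_Rle. intros a _.
      apply (sum_shift_le (fun b => Rabs (G a b t) * rho' ^ a * rho' ^ b) N).
      intros; apply term_nonneg; lra.
    + apply (sum_mono_N (fun a => sum_f_R0 (fun b => Rabs (G a b t) * rho' ^ a * rho' ^ b) (S N)) N (S N)).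
      intros. apply sum_nonneg; intros; apply term_nonneg; lra. lia.
Qed.

Lemma bnd_smul (P Q : series) rho t A B : 0 <= rho -> bnd P rho t A -> bnd Q rho t B ->
  bnd (smul P Q) rho t (A * B).
Proof.
  intros Hr HP HQ N.
  set (p := fun i k => Rabs (P i k t) * rho ^ i * rho ^ k).
  set (q := fun i k => Rabs (Q i k t) * rho ^ i * rho ^ k).
  assert (Hp : forall i k, 0 <= p i k) by (intros; apply term_nonneg; auto).
  assert (Hq : forall i k, 0 <= q i k) by (intros; apply term_nonneg; auto).
  assert (Step1 : forall a b, Rabs (smul P Q a b t) * rho ^ a * rho ^ b <=
     sum_f_R0 (fun i => sum_f_R0 (fun k => p i k * q (a - i)%nat (b - k)%nat) b) a).
  { intros a b. unfold smul.
    eapply Rle_trans.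
    { apply Rmult_le_compat_r. apply pow_le; auto. apply Rmult_le_compat_r. apply pow_le; auto.
      eapply Rle_trans. apply sum_f_R0_triangle. apply sum_Rle; intros i _.
      apply sum_f_R0_triangle. }
    rewrite Rmult_assoc, Rmult_comm, scal_sum. apply Req_le. apply sum_eq; intros i Hi.
    rewrite Rmult_comm, scal_sum. apply sum_eq; intros k Hk.
    unfold p, q. rewrite Rabs_mult.
    replace (rho ^ a) with (rho ^ i * rho ^ (a - i)) by (rewrite <- pow_add; f_equal; lia).
    replace (rho ^ b) with (rho ^ k * rho ^ (b - k)) by (rewrite <- pow_add; f_equal; lia). ring. }
  unfold rs.
  apply Rle_trans with (sum_f_R0 (fun a => sum_f_R0 (fun b =>
     sum_f_R0 (fun i => sum_f_R0 (fun k => p i k * q (a - i)%nat (b - k)%nat) b) a) N) N).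
  { apply sum_Rle; intros; apply sum_Rle; intros; apply Step1. }
  set (H := fun i j => sum_f_R0 (fun b => sum_f_R0 (fun k => p i k * q j (b - k)%nat) b) N).
  assert (HH : forall i j, 0 <= H i j).
  { intros; unfold H; apply sum_nonneg; intros; apply sum_nonneg; intros; apply Rmult_le_pos; auto. }
  rewrite sum_eq with (Bn := fun a => sum_f_R0 (fun i => H i (a - i)%nat) a).
  2:{ intros a _. unfold H. apply sum_swap. }
  eapply Rle_trans. apply (tri_le H N HH).
  apply Rle_trans with (sum_f_R0 (fun i => sum_f_R0 (fun j =>
     sum_f_R0 (fun k => sum_f_R0 (fun l => p i k * q j l) N) N) N) N).
  { apply sum_Rle; intros i _; apply sum_Rle; intros j _. unfold H.
    apply (tri_le (fun k l => p i k * q j l)). intros; apply Rmult_le_pos; auto. }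
  rewrite sum_eq with (Bn := fun i => sum_f_R0 (fun k => p i k *
      sum_f_R0 (fun j => sum_f_R0 (fun l => q j l) N) N) N).
  2:{ intros i _. rewrite sum_swap. apply sum_eq; intros k _.
      rewrite scal_sum. apply sum_eq; intros j _. rewrite Rmult_comm, scal_sum.
      apply sum_eq; intros; ring. }
  rewrite sum_eq with (Bn := fun i => sum_f_R0 (fun k => p i k) N *
      sum_f_R0 (fun j => sum_f_R0 (fun l => q j l) N) N).
  2:{ intros i _. rewrite Rmult_comm, scal_sum. apply sum_eq; intros; ring. }
  set (SQ := sum_f_R0 (fun j => sum_f_R0 (fun l => q j l) N) N).
  rewrite <- scal_sum.
  set (SP := sum_f_R0 (fun i => sum_f_R0 (fun k => p i k) N) N).
  assert (0 <= SP) by (apply sum_nonneg; intros; apply sum_nonneg; auto).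
  assert (0 <= SQ) by (apply sum_nonneg; intros; apply sum_nonneg; auto).
  assert (SP <= A) by apply HP. assert (SQ <= B) by apply HQ.
  rewrite Rmult_comm. apply Rmult_le_compat; auto.
Qed.

Lemma bnd_Lchi (X G : series) rho t A1 D1 A2 D2 : 0 <= rho ->
  bnd (dQ G) rho t A1 -> bnd (dP X) rho t D1 -> bnd (dP G) rho t A2 -> bnd (dQ X) rho t D2 ->
  bnd (Lchi X G) rho t (A1 * D1 + A2 * D2).
Proof.
  intros Hr H1 H2 H3 H4 N.
  assert (S1 := bnd_smul _ _ _ _ _ _ Hr H1 H2 N).
  assert (S2 := bnd_smul _ _ _ _ _ _ Hr H3 H4 N).
  unfold rs in *. eapply Rle_trans; [|apply Rplus_le_compat; [apply S1|apply S2]].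
  rewrite <- plus_sum. apply sum_Rle; intros a _. rewrite <- plus_sum. apply sum_Rle; intros b _.
  unfold Lchi. assert (0 <= rho ^ a) by (apply pow_le; auto). assert (0 <= rho ^ b) by (apply pow_le; auto).
  assert (HH := Rabs_triang (smul (dQ G) (dP X) a b t) (- smul (dP G) (dQ X) a b t)).
  rewrite Rabs_Ropp in HH. unfold Rminus.
  assert (0 <= rho ^ a * rho ^ b) by (apply Rmult_le_pos; auto).
  rewrite !Rmult_assoc. rewrite <- Rmult_plus_distr_r. apply Rmult_le_compat_r; auto.
Qed.

Lemma normle_of_bnd (G : series) rho t B : 0 <= rho -> bnd G rho t B -> normle G rho B t.
Proof.
  intros Hr H N. unfold normle. eapply Rle_trans; [|apply (H N)]. unfold rs.
  rewrite (sum_eq _ (fun n => sum_f_R0 (fun k => (fun i j => Rabs (G i j t) * rho ^ i * rho ^ j) k (n - k)%nat) n)).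
  - apply (tri_le (fun i j => Rabs (G i j t) * rho ^ i * rho ^ j)). intros; apply term_nonneg; auto.
  - intros n _. apply sum_eq; intros k Hk. simpl.
    replace (rho ^ n) with (rho ^ k * rho ^ (n - k)) by (rewrite <- pow_add; f_equal; lia). ring.
Qed.

Lemma coef_of_normle (G : series) rho t B a b : 0 <= rho -> normle G rho B t ->
  Rabs (G a b t) * rho ^ a * rho ^ b <= B.
Proof.
  intros Hr H. specialize (H (a + b)%nat). eapply Rle_trans; [|apply H].
  eapply Rle_trans; [|apply (sum_term_le _ _ (a + b)%nat)].
  - eapply Rle_trans; [|apply (sum_term_le _ _ a)].
    + simpl. replace (a + b - a)%nat with b by lia. rewrite pow_add. rewrite Rmult_assoc. apply Rle_refl.
    + intros. apply Rmult_le_pos; [apply Rabs_pos| apply pow_le; auto].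
    + lia.
  - intros. apply sum_nonneg; intros. apply Rmult_le_pos; [apply Rabs_pos| apply pow_le; auto].
  - lia.
Qed.

Lemma sum_const c a : sum_f_R0 (fun _ => c) a = INR (S a) * c.
Proof. induction a. simpl; ring. simpl sum_f_R0. rewrite IHa, !S_INR. ring. Qed.

Lemma sum_lin y N : 0 <= y < 1 ->
  sum_f_R0 (fun a => INR (S a) * y ^ a) N <= / (1 - y) * / (1 - y).
Proof.
  intros Hy.
  rewrite (sum_eq _ (fun n => sum_f_R0 (fun k => (fun i j => y ^ i * y ^ j) k (n - k)%nat) n)).
  - eapply Rle_trans. apply (tri_le (fun i j => y ^ i * y ^ j)). intros; apply Rmult_le_pos; apply pow_le; lra.
    rewrite <- sum_mult. apply Rmult_le_compat; try apply sum_geom_nonneg; try lra; apply geom_le; lra.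
  - intros n _. rewrite <- sum_const. apply sum_eq; intros k Hk. simpl.
    rewrite <- pow_add. f_equal. lia.
Qed.

Lemma bnd_dPX (X : series) R y t C : 0 < R -> 0 <= y < 1 -> 0 <= C ->
  (forall a b, Rabs (X a b t) * R ^ a * R ^ b <= C) ->
  bnd (dP X) (y * R) t (C * / R * (/ (1 - y) * / (1 - y) * / (1 - y))).
Proof.
  intros HR Hy HC H N. unfold rs, dP.
  apply Rle_trans with (sum_f_R0 (fun a => sum_f_R0 (fun b => (C * / R) * (INR (S a) * y ^ a * y ^ b)) N) N).
  - apply sum_Rle; intros a _. apply sum_Rle; intros b _.
    rewrite Rabs_mult, Rabs_right by (apply Rle_ge, pos_INR). rewrite !Rpow_mult_distr.
    specialize (H (S a) b).
    assert (0 <= INR (S a) * y ^ a * y ^ b) by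
      (apply Rmult_le_pos; [apply Rmult_le_pos; [apply pos_INR|]|]; apply pow_le; lra).
    replace (INR (S a) * Rabs (X (S a) b t) * (y ^ a * R ^ a) * (y ^ b * R ^ b)) with
      ((Rabs (X (S a) b t) * R ^ S a * R ^ b) * / R * (INR (S a) * y ^ a * y ^ b))
      by (simpl; field; lra).
    apply Rmult_le_compat_r; auto. apply Rmult_le_compat_r. apply Rlt_le, Rinv_0_lt_compat; auto. auto.
  - assert (E : sum_f_R0 (fun a => sum_f_R0 (fun b => (C * / R) * (INR (S a) * y ^ a * y ^ b)) N) N =
      (C * / R) * (sum_f_R0 (fun a => INR (S a) * y ^ a) N * sum_f_R0 (fun i => y ^ i) N)).
    { rewrite sum_mult, scal_sum. apply sum_eq; intros. rewrite (Rmult_comm (sum_f_R0 _ _)), scal_sum. apply sum_eq; intros; ring. }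
    rewrite E. apply Rmult_le_compat_l. apply Rmult_le_pos; auto. apply Rlt_le, Rinv_0_lt_compat; auto.
    apply Rmult_le_compat; try apply sum_geom_nonneg; try lra.
    apply sum_nonneg; intros; apply Rmult_le_pos; [apply pos_INR|apply pow_le; lra].
    apply sum_lin; lra. apply geom_le; lra.
Qed.

Lemma bnd_dQX (X : series) R y t C : 0 < R -> 0 <= y < 1 -> 0 <= C ->
  (forall a b, Rabs (X a b t) * R ^ a * R ^ b <= C) ->
  bnd (dQ X) (y * R) t (C * / R * (/ (1 - y) * / (1 - y) * / (1 - y))).
Proof.
  intros HR Hy HC H N. unfold rs, dQ.
  apply Rle_trans with (sum_f_R0 (fun a => sum_f_R0 (fun b => (C * / R) * (y ^ a * (INR (S b) * y ^ b))) N) N).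
  - apply sum_Rle; intros a _. apply sum_Rle; intros b _.
    rewrite Rabs_mult, Rabs_right by (apply Rle_ge, pos_INR). rewrite !Rpow_mult_distr.
    specialize (H a (S b)).
    assert (0 <= y ^ a * (INR (S b) * y ^ b)) by
      (apply Rmult_le_pos; [|apply Rmult_le_pos; [apply pos_INR|]]; apply pow_le; lra).
    replace (INR (S b) * Rabs (X a (S b) t) * (y ^ a * R ^ a) * (y ^ b * R ^ b)) with
      ((Rabs (X a (S b) t) * R ^ a * R ^ S b) * / R * (y ^ a * (INR (S b) * y ^ b)))
      by (simpl; field; lra).
    apply Rmult_le_compat_r; auto. apply Rmult_le_compat_r. apply Rlt_le, Rinv_0_lt_compat; auto. auto.
  - assert (E : sum_f_R0 (fun a => sum_f_R0 (fun b => (C * / R) * (y ^ a * (INR (S b) * y ^ b))) N) N =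
      (C * / R) * (sum_f_R0 (fun i => y ^ i) N * sum_f_R0 (fun a => INR (S a) * y ^ a) N)).
    { rewrite sum_mult, scal_sum. apply sum_eq; intros. rewrite (Rmult_comm (sum_f_R0 _ _)), scal_sum. apply sum_eq; intros; ring. }
    rewrite E. apply Rmult_le_compat_l. apply Rmult_le_pos; auto. apply Rlt_le, Rinv_0_lt_compat; auto.
    replace (/ (1 - y) * / (1 - y) * / (1 - y)) with (/ (1 - y) * (/ (1 - y) * / (1 - y))) by ring.
    apply Rmult_le_compat; try apply sum_geom_nonneg; try lra.
    apply sum_nonneg; intros; apply Rmult_le_pos; [apply pos_INR|apply pow_le; lra].
    apply geom_le; lra. apply sum_lin; lra.
Qed.

Lemma bnd_weaken (G : series) rho t B B' : B <= B' -> bnd G rho t B -> bnd G rho t B'.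
Proof. intros H1 H2 N. specialize (H2 N). lra. Qed.

Lemma iter_bnd (X F : series) t R' K0 D del : 0 < del -> 0 <= D ->
  (forall rho, 0 <= rho <= R' -> bnd F rho t K0) ->
  (forall rho, 0 <= rho <= R' -> bnd (dP X) rho t D /\ bnd (dQ X) rho t D) ->
  forall i rho, 0 <= rho -> rho + INR i * del <= R' ->
    bnd (Lchi_pow X i F) rho t (K0 * (2 * D / del) ^ i).
Proof.
  intros Hd HD HF HX i. induction i; intros rho Hr Hi.
  - simpl in *. rewrite Rmult_1_r. apply HF. lra.
  - change (Lchi_pow X (S i) F) with (Lchi X (Lchi_pow X i F)).
    rewrite S_INR in Hi.
    assert (IH := IHi (rho + del) ltac:(lra) ltac:(lra)).
    assert (0 <= INR i) by apply pos_INR.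
    assert (H1 := bnd_dQ _ rho (rho + del) t _ ltac:(lra) IH).
    assert (H2 := bnd_dP _ rho (rho + del) t _ ltac:(lra) IH).
    destruct (HX rho) as [HX1 HX2]. nra.
    eapply bnd_weaken; [|apply (bnd_Lchi _ _ _ _ _ _ _ _ Hr H1 HX1 H2 HX2)].
    replace (rho + del - rho) with del by ring. simpl. apply Req_le. field. lra.
Qed.

Lemma exp_pow_n x n : exp x ^ n = exp (INR n * x).
Proof.
  induction n. simpl. rewrite Rmult_0_l, exp_0. reflexivity.
  simpl pow. rewrite IHn, <- exp_plus, S_INR. f_equal. ring.
Qed.

Lemma pow_fact_le n : INR n ^ n <= INR (fact n) * exp 1 ^ n.
Proof.
  induction n.
  - simpl. lra.
  - assert (Hn : INR (S n) ^ n <= INR n ^ n * exp 1).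
    { destruct n.
      - simpl. assert (H := exp_ineq1_le 1). lra.
      - assert (Hp : 0 < INR (S n)) by (apply lt_0_INR; lia).
        assert (INR (S (S n)) <= INR (S n) * exp (/ INR (S n))).
        { assert (H := exp_ineq1_le (/ INR (S n))). rewrite (S_INR (S n)).
          apply Rle_trans with (INR (S n) * (1 + / INR (S n))). right; field; lra.
          apply Rmult_le_compat_l; lra. }
        eapply Rle_trans. apply pow_incr. split. apply pos_INR. apply H.
        rewrite Rpow_mult_distr, exp_pow_n. right. f_equal. f_equal. field. lra. }
    change (INR (S n) ^ S n) with (INR (S n) * INR (S n) ^ n).
    change (fact (S n)) with (S n * fact n)%nat. rewrite mult_INR.
    change (exp 1 ^ S n) with (exp 1 * exp 1 ^ n).
    assert (0 <= INR (S n)) by apply pos_INR.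
    assert (0 <= exp 1) by (apply Rlt_le, exp_pos).
    assert (0 <= INR n ^ n) by (apply pow_le, pos_INR).
    apply Rle_trans with (INR (S n) * (INR n ^ n * exp 1)). apply Rmult_le_compat_l; auto.
    apply Rle_trans with (INR (S n) * (INR (fact n) * exp 1 ^ n * exp 1)).
    apply Rmult_le_compat_l; auto. apply Rmult_le_compat_r; auto.
    right; ring.
Qed.

Lemma coef_le m c : 0 <= c ->
  INR m / INR (fact (S m)) * (INR m * c) ^ m <= (exp 1 * c) ^ m.
Proof.
  intros Hc. rewrite !Rpow_mult_distr.
  assert (H := pow_fact_le m).
  assert (Hf : 0 < INR (fact m)) by (apply lt_0_INR, lt_O_fact).
  change (fact (S m)) with (S m * fact m)%nat. rewrite mult_INR.
  assert (0 < INR (S m)) by (apply lt_0_INR; lia).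
  assert (0 <= c ^ m) by (apply pow_le; auto).
  assert (INR m <= INR (S m)) by (rewrite S_INR; lra).
  assert (0 <= INR m) by apply pos_INR.
  assert (0 <= exp 1 ^ m) by (apply pow_le, Rlt_le, exp_pos).
  rewrite <- Rmult_assoc. apply Rmult_le_compat_r; auto.
  unfold Rdiv. rewrite Rinv_mult.
  apply Rle_trans with (INR m * / INR (S m) * (/ INR (fact m) * INR m ^ m)). right; ring.
  apply Rle_trans with (1 * exp 1 ^ m); [|lra].
  apply Rmult_le_compat.
  - apply Rmult_le_pos; auto. apply Rlt_le, Rinv_0_lt_compat; auto.
  - apply Rmult_le_pos. apply Rlt_le, Rinv_0_lt_compat; auto. apply pow_le; auto.
  - apply Rmult_le_reg_r with (INR (S m)); auto. rewrite Rmult_assoc, Rinv_l by lra. lra.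
  - apply Rmult_le_reg_l with (INR (fact m)); auto. rewrite <- Rmult_assoc, Rinv_r by lra. lra.
Qed.

Lemma exp_le_mono x y : x <= y -> exp x <= exp y.
Proof. intros [H|H]. left; apply exp_increasing; auto. subst; lra. Qed.

Lemma dexp lam s : derivable_pt_lim (fun u => exp (lam * u)) s (lam * exp (lam * s)).
Proof.
  assert (H := derivable_pt_lim_comp (mult_real_fct lam id) exp s (lam * 1) (exp (lam * s))
    (derivable_pt_lim_scal id lam s 1 (derivable_pt_lim_id s)) (derivable_pt_lim_exp _)).
  replace (lam * exp (lam * s)) with (exp (lam * s) * (lam * 1)) by ring. exact H.
Qed.

Lemma dy (x f : R -> R) lam s : derivable_pt_lim x s (f s - lam * x s) ->
  derivable_pt_lim (fun u => exp (lam * u) * x u) s (exp (lam * s) * f s).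
Proof.
  intros H. assert (H2 := derivable_pt_lim_mult _ _ s _ _ (dexp lam s) H).
  replace (exp (lam * s) * f s) with
    (lam * exp (lam * s) * x s + exp (lam * s) * (f s - lam * x s)) by ring. exact H2.
Qed.

Lemma cmp (y y' h h' : R -> R) t0 t1 : t0 < t1 ->
  (forall s, t0 <= s <= t1 -> derivable_pt_lim y s (y' s)) ->
  (forall s, t0 <= s <= t1 -> derivable_pt_lim h s (h' s)) ->
  (forall s, t0 <= s <= t1 -> Rabs (y' s) <= h' s) ->
  Rabs (y t1 - y t0) <= h t1 - h t0.
Proof.
  intros Ht Hy Hh Hb.
  destruct (MVT_cor2 (h - y)%F (fun s => h' s - y' s) t0 t1 Ht) as [c [E1 Hc]].
  { intros u Hu. apply derivable_pt_lim_minus; auto. }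
  destruct (MVT_cor2 (h + y)%F (fun s => h' s + y' s) t0 t1 Ht) as [c' [E2 Hc']].
  { intros u Hu. apply derivable_pt_lim_plus; auto. }
  unfold minus_fct, plus_fct in *.
  assert (B1 := Hb c ltac:(lra)). assert (B2 := Hb c' ltac:(lra)).
  assert (y' c <= Rabs (y' c)) by apply Rle_abs.
  assert (- y' c' <= Rabs (y' c')) by (rewrite <- Rabs_Ropp; apply Rle_abs).
  assert (- y' c <= Rabs (y' c)) by (rewrite <- Rabs_Ropp; apply Rle_abs).
  assert (y' c' <= Rabs (y' c')) by apply Rle_abs.
  assert (0 <= (h' c - y' c) * (t1 - t0)) by (apply Rmult_le_pos; lra).
  assert (0 <= (h' c' + y' c') * (t1 - t0)) by (apply Rmult_le_pos; lra).
  apply Rabs_le. lra.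
Qed.

Lemma cont_pos (f : R -> R) s : cont_on_Rplus f -> 0 < s -> continuity_pt f s.
Proof.
  intros Hf Hs eps He. destruct (Hf s (Rlt_le _ _ Hs) eps He) as [del [Hd H]].
  exists (Rmin del s). split. apply Rmin_pos; auto.
  intros u [_ Hu]. simpl in *. unfold R_dist in *.
  assert (Rabs (u - s) < del) by (eapply Rlt_le_trans; [apply Hu|apply Rmin_l]).
  assert (Rabs (u - s) < s) by (eapply Rlt_le_trans; [apply Hu|apply Rmin_r]).
  apply H; auto. apply Rabs_def2 in H1. lra.
Qed.

Lemma dh c lam s : derivable_pt_lim (fun u => c * exp (lam * u)) s (c * (lam * exp (lam * s))).
Proof. exact (derivable_pt_lim_scal _ c s _ (dexp lam s)). Qed.

Lemma ode_pos (f x : R -> R) lam M : 0 < lam -> 0 <= M ->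
  (forall s, 0 <= s -> Rabs (f s) <= M) ->
  (forall s, 0 < s -> derivable_pt_lim x s (f s - lam * x s)) ->
  cont_on_Rplus x -> x 0 = 0 ->
  forall t, 0 <= t -> Rabs (x t) <= M / lam.
Proof.
  intros Hl HM Hf Hd Hc H0 t Ht.
  destruct (Req_dec t 0) as [->|Htn].
  { rewrite H0, Rabs_R0. apply Rmult_le_pos; auto. apply Rlt_le, Rinv_0_lt_compat; auto. }
  assert (Htp : 0 < t) by lra.
  set (y := fun u => exp (lam * u) * x u).
  assert (Hyt : Rabs (y t) <= M / lam * exp (lam * t)).
  { apply Rle_plus_epsilon. intros eps Heps.
    assert (He : 0 < exp (lam * t)) by apply exp_pos.
    destruct (Hc 0 (Rle_refl 0) (eps / exp (lam * t))) as [del [Hdel Hx]].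
    { apply Rdiv_lt_0_compat; auto. }
    set (t' := Rmin (del / 2) (t / 2)).
    assert (Ht'1 : t' <= del / 2) by apply Rmin_l. assert (Ht'2 : t' <= t / 2) by apply Rmin_r.
    assert (Ht'0 : 0 < t') by (apply Rmin_pos; lra).
    assert (Hcmp := cmp y (fun s => exp (lam * s) * f s) (fun u => (M / lam) * exp (lam * u))
      (fun s => (M / lam) * (lam * exp (lam * s))) t' t ltac:(lra)).
    assert (Hyy : Rabs (y t - y t') <= M / lam * exp (lam * t) - M / lam * exp (lam * t')).
    { apply Hcmp.
      - intros s Hs. apply dy. apply Hd. lra.
      - intros s Hs. apply dh.
      - intros s Hs. rewrite Rabs_mult, Rabs_right by (apply Rle_ge, Rlt_le, exp_pos).
        replace (M / lam * (lam * exp (lam * s))) with (exp (lam * s) * M) by (field; lra).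
        apply Rmult_le_compat_l. apply Rlt_le, exp_pos. apply Hf. lra. }
    assert (Hxt' : Rabs (x t') < eps / exp (lam * t)).
    { rewrite <- (Rminus_0_r (x t')), <- H0. apply Hx. lra. rewrite Rminus_0_r, Rabs_right; lra. }
    assert (Hyt' : Rabs (y t') <= eps).
    { unfold y. rewrite Rabs_mult, Rabs_right by (apply Rle_ge, Rlt_le, exp_pos).
      assert (exp (lam * t') <= exp (lam * t)) by (apply exp_le_mono; apply Rmult_le_compat_l; lra).
      apply Rle_trans with (exp (lam * t) * (eps / exp (lam * t))).
      apply Rmult_le_compat; try lra. apply Rlt_le, exp_pos. apply Rabs_pos.
      right; field; lra. }
    assert (0 <= M / lam * exp (lam * t')).
    { apply Rmult_le_pos. apply Rmult_le_pos; auto. apply Rlt_le, Rinv_0_lt_compat; auto. apply Rlt_le, exp_pos. }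
    assert (HT := Rabs_triang (y t - y t') (y t')). replace (y t - y t' + y t') with (y t) in HT by ring.
    lra. }
  unfold y in Hyt. rewrite Rabs_mult, Rabs_right in Hyt by (apply Rle_ge, Rlt_le, exp_pos).
  assert (He : 0 < exp (lam * t)) by apply exp_pos.
  apply Rmult_le_reg_l with (exp (lam * t)); auto. lra.
Qed.

Lemma cont_g (f : R -> R) lam s : cont_on_Rplus f -> 0 < s ->
  continuous (fun u => exp (lam * u) * f u) s.
Proof.
  intros Hf Hs. apply continuity_pt_filterlim.
  apply (continuity_pt_mult (fun u => exp (lam * u)) f).
  apply derivable_continuous_pt. exists (lam * exp (lam * s)). apply dexp.
  apply cont_pos; auto.
Qed.

Lemma ftc_y (f x : R -> R) lam M T : lam <= 0 -> 0 <= M -> cont_on_Rplus f ->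
  (forall s, 0 <= s -> Rabs (f s) <= M) ->
  (forall s, 0 < s -> derivable_pt_lim x s (f s - lam * x s)) ->
  cont_on_Rplus x -> 0 < T ->
  forall pr : Riemann_integrable (fun s => exp (lam * s) * f s) 0 T,
  exp (lam * T) * x T - x 0 = RiemannInt pr.
Proof.
  intros Hl HM Hfc Hf Hd Hc HT pr.
  set (g := fun s => exp (lam * s) * f s).
  set (y := fun u => exp (lam * u) * x u).
  change (y T - x 0 = RiemannInt pr).
  apply cond_eq. intros eta Heta.
  destruct (Hc 0 (Rle_refl 0) (eta / 4)) as [del [Hdel Hx]]. lra.
  set (K1 := M + (- lam) * Rabs (x 0) + 1).
  assert (HK1 : 0 < K1) by (unfold K1; assert (0 <= Rabs (x 0)) by apply Rabs_pos; nra).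
  set (t' := Rmin (T / 2) (Rmin (del / 2) (eta / (4 * K1)))).
  assert (Ht1 : t' <= T / 2) by apply Rmin_l.
  assert (Ht2 : t' <= del / 2) by (eapply Rle_trans; [apply Rmin_r|apply Rmin_l]).
  assert (Ht3 : t' <= eta / (4 * K1)) by (eapply Rle_trans; [apply Rmin_r|apply Rmin_r]).
  assert (Ht0 : 0 < t').
  { apply Rmin_pos. lra. apply Rmin_pos. lra. apply Rdiv_lt_0_compat; lra. }
  assert (Hex := ex_RInt_Reals_1 _ _ _ pr).
  assert (Hex1 : ex_RInt g 0 t') by (apply (@ex_RInt_Chasles_1 R_CompleteNormedModule _ _ _ T); auto; lra).
  assert (Hex2 : ex_RInt g t' T) by (apply (@ex_RInt_Chasles_2 R_CompleteNormedModule _ 0); auto; lra).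
  assert (HCh := @RInt_Chasles R_CompleteNormedModule g 0 t' T Hex1 Hex2).
  rewrite (RInt_Reals g 0 T pr) in HCh.
  assert (Hder : RInt g t' T = y T - y t').
  { apply (@is_RInt_unique R_CompleteNormedModule).
    apply (@is_RInt_derive R_CompleteNormedModule y g).
    - intros u Hu. rewrite Rmin_left, Rmax_right in Hu by lra. apply is_derive_Reals. apply dy. apply Hd. lra.
    - intros u Hu. rewrite Rmin_left, Rmax_right in Hu by lra. apply cont_g; auto. lra. }
  assert (Hsm : Rabs (RInt g 0 t') <= (t' - 0) * M).
  { apply abs_RInt_le_const; auto. lra. intros u Hu. unfold g.
    rewrite Rabs_mult, Rabs_right by (apply Rle_ge, Rlt_le, exp_pos).
    assert (exp (lam * u) <= 1) by (rewrite <- exp_0; apply exp_le_mono; nra).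
    assert (Rabs (f u) <= M) by (apply Hf; lra).
    assert (0 <= Rabs (f u)) by apply Rabs_pos. nra. }
  assert (Hxt : Rabs (x t' - x 0) < eta / 4) by (apply Hx; [lra| rewrite Rminus_0_r, Rabs_right; lra]).
  assert (Hy0 : Rabs (y t' - x 0) <= eta / 4 + (- lam * t') * Rabs (x 0)).
  { unfold y. replace (exp (lam * t') * x t' - x 0) with
      (exp (lam * t') * (x t' - x 0) + (exp (lam * t') - 1) * x 0) by ring.
    eapply Rle_trans. apply Rabs_triang. rewrite !Rabs_mult.
    assert (E1 : exp (lam * t') <= 1) by (rewrite <- exp_0; apply exp_le_mono; nra).
    assert (E2 := exp_ineq1_le (lam * t')).
    assert (E3 := exp_pos (lam * t')).
    rewrite (Rabs_right (exp _)) by lra. rewrite (Rabs_left1 (exp _ - 1)) by lra.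
    assert (0 <= Rabs (x 0)) by apply Rabs_pos. assert (0 <= Rabs (x t' - x 0)) by apply Rabs_pos.
    nra. }
  change (plus (RInt g 0 t') (RInt g t' T)) with (RInt g 0 t' + RInt g t' T) in HCh.
  assert (E : RiemannInt pr = RInt g 0 t' + RInt g t' T) by exact (eq_sym HCh). rewrite E, Hder.
  replace (y T - x 0 - (RInt g 0 t' + (y T - y t'))) with ((y t' - x 0) - RInt g 0 t') by ring.
  eapply Rle_lt_trans. apply Rabs_triang. rewrite Rabs_Ropp.
  assert (t' * K1 <= eta / 4).
  { apply Rmult_le_reg_r with (/ K1). apply Rinv_0_lt_compat; auto.
    rewrite Rmult_assoc, Rinv_r by lra. replace (eta / 4 * / K1) with (eta / (4 * K1)) by (field; lra). lra. }
  unfold K1 in *. assert (0 <= Rabs (x 0)) by apply Rabs_pos. nra.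
Qed.

Lemma ode_nonpos (f x : R -> R) lam a M : lam <= 0 -> 0 < a -> 0 <= M ->
  cont_on_Rplus f ->
  (forall s, 0 <= s -> Rabs (f s) <= M * exp (- a * s)) ->
  (forall s, 0 < s -> derivable_pt_lim x s (f s - lam * x s)) ->
  cont_on_Rplus x ->
  improper_int0 (fun s => exp (lam * s) * f s) (- x 0) ->
  forall t, 0 <= t -> Rabs (x t) <= M / (a - lam).
Proof.
  intros Hl Ha HM Hfc Hf Hd Hc [Hint1 Hint2].
  assert (HfM : forall s, 0 <= s -> Rabs (f s) <= M).
  { intros s Hs. eapply Rle_trans. apply Hf; auto.
    assert (exp (- a * s) <= 1) by (rewrite <- exp_0; apply exp_le_mono; nra). nra. }
  assert (Hal : 0 < a - lam) by lra.
  assert (Hpos : forall t, 0 < t -> Rabs (x t) <= M / (a - lam)).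
  { intros t Ht.
    set (y := fun u => exp (lam * u) * x u).
    set (c := - (M / (a - lam))).
    assert (Hyt : Rabs (y t) <= M / (a - lam) * exp ((lam - a) * t)).
    { apply Rle_plus_epsilon. intros eps Heps.
      destruct (Hint2 eps Heps) as [T0 HT0].
      set (T := Rmax T0 (t + 1)).
      assert (HT1 : T0 <= T) by apply Rmax_l. assert (HT2 : t + 1 <= T) by apply Rmax_r.
      destruct (Hint1 T ltac:(lra)) as [pr _].
      assert (HyT : Rabs (y T) < eps).
      { assert (E := ftc_y f x lam M T Hl HM Hfc HfM Hd Hc ltac:(lra) pr).
        specialize (HT0 T HT1 ltac:(lra) pr).
        replace (y T) with (RiemannInt pr - - x 0) by (unfold y; lra). auto. }
      assert (Hcmp : Rabs (y T - y t) <= c * exp ((lam - a) * T) - c * exp ((lam - a) * t)).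
      { apply (cmp y (fun s => exp (lam * s) * f s) (fun u => c * exp ((lam - a) * u))
          (fun s => c * ((lam - a) * exp ((lam - a) * s))) t T). lra.
        - intros s Hs. apply dy, Hd. lra.
        - intros s Hs. apply dh.
        - intros s Hs. rewrite Rabs_mult, Rabs_right by (apply Rle_ge, Rlt_le, exp_pos).
          replace (c * ((lam - a) * exp ((lam - a) * s))) with (exp (lam * s) * (M * exp (- a * s))).
          apply Rmult_le_compat_l. apply Rlt_le, exp_pos. apply Hf; lra.
          unfold c. replace ((lam - a) * s) with (lam * s + (- a * s)) by ring. rewrite exp_plus. field. lra. }
      assert (c * exp ((lam - a) * T) <= 0).
      { unfold c. assert (0 <= M / (a - lam)) by (apply Rmult_le_pos; auto; apply Rlt_le, Rinv_0_lt_compat; auto).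
        assert (0 < exp ((lam - a) * T)) by apply exp_pos. nra. }
      assert (HT := Rabs_triang (y T) (- (y T - y t))). rewrite Rabs_Ropp in HT.
      replace (y T + - (y T - y t)) with (y t) in HT by ring. unfold c in *. lra. }
    unfold y in Hyt. rewrite Rabs_mult, Rabs_right in Hyt by (apply Rle_ge, Rlt_le, exp_pos).
    replace ((lam - a) * t) with (lam * t + (- a * t)) in Hyt by ring. rewrite exp_plus in Hyt.
    assert (He : 0 < exp (lam * t)) by apply exp_pos.
    assert (Hea : exp (- a * t) <= 1) by (rewrite <- exp_0; apply exp_le_mono; nra).
    assert (0 <= M / (a - lam)) by (apply Rmult_le_pos; auto; apply Rlt_le, Rinv_0_lt_compat; auto).
    apply Rmult_le_reg_l with (exp (lam * t)); auto.
    apply Rle_trans with (M / (a - lam) * (exp (lam * t) * exp (- a * t))); auto.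
    replace (M / (a - lam) * (exp (lam * t) * exp (- a * t))) with
      ((exp (lam * t) * (M / (a - lam))) * exp (- a * t)) by ring.
    rewrite <- (Rmult_1_r (exp (lam * t) * (M / (a - lam)))) at 2.
    apply Rmult_le_compat_l; auto. apply Rmult_le_pos; lra. }
  intros t Ht. destruct (Req_dec t 0) as [->|Htn]; [|apply Hpos; lra].
  apply Rle_plus_epsilon. intros eps Heps.
  destruct (Hc 0 (Rle_refl 0) eps Heps) as [del [Hdel Hx]].
  assert (H1 : Rabs (x (del / 2) - x 0) < eps) by (apply Hx; [lra| rewrite Rminus_0_r, Rabs_right; lra]).
  assert (H2 := Hpos (del / 2) ltac:(lra)).
  assert (HT := Rabs_triang (x (del / 2)) (- (x (del / 2) - x 0))). rewrite Rabs_Ropp in HT.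
  replace (x (del / 2) + - (x (del / 2) - x 0)) with (x 0) in HT by ring. lra.
Qed.

Definition lieterm (X F : series) (p q : nat) (t : R) (s : nat) : R :=
  INR (S s) / INR (fact (S (S s))) * Lchi_pow X (S s) F p q t.
Definition lie (X F : series) : series := fun p q t => Series (lieterm X F p q t).

Lemma cv_const c : Un_cv (fun _ => c) c.
Proof. intros e He. exists 0%nat. intros. unfold R_dist. rewrite Rminus_diag, Rabs_R0. auto. Qed.

Lemma cv_sum (U : nat -> nat -> R) (l : nat -> R) N :
  (forall i, Un_cv (fun M => U M i) (l i)) -> Un_cv (fun M => sum_f_R0 (U M) N) (sum_f_R0 l N).
Proof.
  intros H. induction N; simpl. apply H. apply CV_plus; auto.
Qed.

Lemma coef_nonneg s : 0 <= INR (S s) / INR (fact (S (S s))).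
Proof.
  unfold Rdiv. apply Rmult_le_pos. apply pos_INR. apply Rlt_le, Rinv_0_lt_compat, lt_0_INR, lt_O_fact.
Qed.

Lemma lie_main (F X : series) t R' r K0 D :
  0 < r < R' -> 0 <= K0 -> 0 <= D ->
  exp 1 * (2 * D / (R' - r)) <= 1/2 ->
  (forall rho, 0 <= rho <= R' -> bnd F rho t K0) ->
  (forall rho, 0 <= rho <= R' -> bnd (dP X) rho t D /\ bnd (dQ X) rho t D) ->
  (forall p q, infinite_sum (lieterm X F p q t) (lie X F p q t)) /\
  bnd (lie X F) r t (K0 * (2 * (exp 1 * (2 * D / (R' - r))))).
Proof.
  intros Hr HK HD Hth HF HX.
  set (th := exp 1 * (2 * D / (R' - r))).
  assert (Hth0 : 0 <= th).
  { unfold th. apply Rmult_le_pos. apply Rlt_le, exp_pos. unfold Rdiv.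
    apply Rmult_le_pos. lra. apply Rlt_le, Rinv_0_lt_compat. lra. }
  assert (Hrs : forall s, bnd (Lchi_pow X (S s) F) r t (K0 * (INR (S s) * (2 * D / (R' - r))) ^ S s)).
  { intros s. assert (Hm : 0 < INR (S s)) by (apply lt_0_INR; lia).
    eapply bnd_weaken; [|apply (iter_bnd X F t R' K0 D ((R' - r) / INR (S s)))]; auto.
    - right. f_equal. f_equal. field. split; lra.
    - unfold Rdiv. apply Rmult_lt_0_compat. lra. apply Rinv_0_lt_compat; auto.
    - lra.
    - right. field. lra. }
  assert (Hterm : forall s N, INR (S s) / INR (fact (S (S s))) * rs (Lchi_pow X (S s) F) r t N <= K0 * th ^ S s).
  { intros s N. apply Rle_trans with (INR (S s) / INR (fact (S (S s))) * (K0 * (INR (S s) * (2 * D / (R' - r))) ^ S s)).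
    apply Rmult_le_compat_l. apply coef_nonneg. apply Hrs.
    replace (INR (S s) / INR (fact (S (S s))) * (K0 * (INR (S s) * (2 * D / (R' - r))) ^ S s))
      with (K0 * (INR (S s) / INR (fact (S (S s))) * (INR (S s) * (2 * D / (R' - r))) ^ S s)) by ring.
    apply Rmult_le_compat_l; auto. apply coef_le.
    unfold Rdiv. apply Rmult_le_pos. lra. apply Rlt_le, Rinv_0_lt_compat. lra. }
  assert (Hcoef : forall s p q, Rabs (lieterm X F p q t s) * r ^ p * r ^ q <= K0 * th ^ S s).
  { intros s p q. unfold lieterm. rewrite Rabs_mult, (Rabs_right (_ / _)) by (apply Rle_ge, coef_nonneg).
    apply Rle_trans with (INR (S s) / INR (fact (S (S s))) * (K0 * (INR (S s) * (2 * D / (R' - r))) ^ S s)).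
    - rewrite !Rmult_assoc. apply Rmult_le_compat_l. apply coef_nonneg. rewrite <- !Rmult_assoc.
      apply bnd_coef. lra. apply Hrs.
    - replace (INR (S s) / INR (fact (S (S s))) * (K0 * (INR (S s) * (2 * D / (R' - r))) ^ S s))
        with (K0 * (INR (S s) / INR (fact (S (S s))) * (INR (S s) * (2 * D / (R' - r))) ^ S s)) by ring.
      apply Rmult_le_compat_l; auto. apply coef_le.
      unfold Rdiv. apply Rmult_le_pos. lra. apply Rlt_le, Rinv_0_lt_compat. lra. }
  assert (Hconv : forall p q, infinite_sum (lieterm X F p q t) (lie X F p q t)).
  { intros p q. apply is_series_Reals. unfold lie. apply Series_correct.
    assert (Hrp : 0 < r ^ p * r ^ q) by (apply Rmult_lt_0_compat; apply pow_lt; lra).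
    apply (@ex_series_le R_AbsRing R_CompleteNormedModule _ (fun s => (K0 * th / (r ^ p * r ^ q)) * th ^ s)).
    - intros s. change (norm (lieterm X F p q t s)) with (Rabs (lieterm X F p q t s)).
      apply Rmult_le_reg_r with (r ^ p * r ^ q); auto.
      replace (K0 * th / (r ^ p * r ^ q) * th ^ s * (r ^ p * r ^ q)) with (K0 * th ^ S s).
      2:{ assert (r ^ p <> 0) by (apply pow_nonzero; lra). assert (r ^ q <> 0) by (apply pow_nonzero; lra).
          simpl; field; auto. }
      rewrite <- Rmult_assoc. apply Hcoef.
    - apply (ex_series_scal (K0 * th / (r ^ p * r ^ q)) (fun s => th ^ s)).
      apply ex_series_geom. rewrite Rabs_right by lra. unfold th in *. lra. }
  split; auto.
  intros N.
  set (PM := fun M a b => sum_f_R0 (lieterm X F a b t) M).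
  set (W := fun M => sum_f_R0 (fun a => sum_f_R0 (fun b => Rabs (PM M a b) * r ^ a * r ^ b) N) N).
  assert (HW : forall M, W M <= K0 * (2 * th)).
  { intros M. unfold W, PM.
    apply Rle_trans with (sum_f_R0 (fun a => sum_f_R0 (fun b =>
       sum_f_R0 (fun s => Rabs (lieterm X F a b t s) * r ^ a * r ^ b) M) N) N).
    { apply sum_Rle; intros a _; apply sum_Rle; intros b _.
      assert (0 <= r ^ a) by (apply pow_le; lra). assert (0 <= r ^ b) by (apply pow_le; lra).
      replace (Rabs (sum_f_R0 (lieterm X F a b t) M) * r ^ a * r ^ b) with
        ((r ^ a * r ^ b) * Rabs (sum_f_R0 (lieterm X F a b t) M)) by ring.
      eapply Rle_trans. apply Rmult_le_compat_l. apply Rmult_le_pos; auto. apply sum_f_R0_triangle.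
      rewrite scal_sum. right. apply sum_eq; intros; ring. }
    rewrite (sum_eq _ (fun a => sum_f_R0 (fun s => sum_f_R0 (fun b =>
          Rabs (lieterm X F a b t s) * r ^ a * r ^ b) N) M)) by (intros; apply sum_swap).
    rewrite sum_swap.
    apply Rle_trans with (sum_f_R0 (fun s => K0 * th ^ S s) M).
    { apply sum_Rle; intros s _. eapply Rle_trans; [|apply (Hterm s N)].
      unfold rs. right. rewrite scal_sum. apply sum_eq; intros a _. rewrite (Rmult_comm (sum_f_R0 _ _)), scal_sum. apply sum_eq; intros b _.
      unfold lieterm. rewrite Rabs_mult, (Rabs_right (_ / _)) by (apply Rle_ge, coef_nonneg). ring. }
    rewrite (sum_eq _ (fun s => th ^ s * (K0 * th))) by (intros; simpl; ring).
    rewrite <- scal_sum. 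
    assert (Hg := geom_le th M ltac:(unfold th in *; lra)).
    assert (Hi : / (1 - th) <= 2).
    { apply Rmult_le_reg_l with (1 - th). unfold th in *; lra. rewrite Rinv_r by (unfold th in *; lra).
      unfold th in *; lra. }
    assert (0 <= K0 * th) by (apply Rmult_le_pos; auto).
    apply Rle_trans with (K0 * th * 2). apply Rmult_le_compat_l; auto. eapply Rle_trans; [apply Hg|exact Hi]. right; ring. }
  assert (Hlim : Un_cv W (rs (lie X F) r t N)).
  { unfold W, rs. apply cv_sum. intros a. apply cv_sum. intros b.
    apply CV_mult; [apply CV_mult|]; try apply cv_const.
    apply cv_cvabs. unfold PM. apply Hconv. }
  exact (Rle_cv_lim HW Hlim (cv_const _)).
Qed.

Lemma div_le_div M u v : 0 <= M -> 0 < v -> v <= u -> M / u <= M / v.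
Proof.
  intros HM Hv Hu. unfold Rdiv. apply Rmult_le_compat_l; auto. apply Rinv_le_contravar; auto.
Qed.

Lemma X_coef (omega a eps R : R) (F X : series) : 0 < omega <= 1 -> 0 < a <= 1 -> 0 < eps -> 0 < R ->
  coeffs_continuous F -> (forall t, 0 <= t -> normle F R (eps * exp (- a * t)) t) ->
  is_gen_fun omega F X ->
  forall p q t, 0 <= t -> Rabs (X p q t) * R ^ p * R ^ q <= eps / (omega * a).
Proof.
  intros Ho Ha He HR HFc HF HX p q t Ht.
  assert (HRpq : 0 < R ^ p * R ^ q) by (apply Rmult_lt_0_compat; apply pow_lt; auto).
  assert (R ^ p <> 0) by (apply pow_nonzero; lra). assert (R ^ q <> 0) by (apply pow_nonzero; lra).
  set (M := eps / (R ^ p * R ^ q)).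
  assert (HM : 0 <= M) by (unfold M; apply Rlt_le, Rdiv_lt_0_compat; auto).
  assert (Hf : forall s, 0 <= s -> Rabs (F p q s) <= M * exp (- a * s)).
  { intros s Hs. assert (Hcn := coef_of_normle F R s _ p q (Rlt_le _ _ HR) (HF s Hs)).
    unfold M. apply Rmult_le_reg_r with (R ^ p * R ^ q); auto.
    replace (eps / (R ^ p * R ^ q) * exp (- a * s) * (R ^ p * R ^ q)) with (eps * exp (- a * s))
      by (field; auto). rewrite <- Rmult_assoc. exact Hcn. }
  assert (Hoa : 0 < omega * a) by (apply Rmult_lt_0_compat; lra).
  assert (Hgoal : Rabs (X p q t) <= M / (omega * a)).
  2:{ apply Rle_trans with (M / (omega * a) * (R ^ p * R ^ q)).
      rewrite Rmult_assoc. apply Rmult_le_compat_r; lra.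
      right. unfold M. field. repeat split; lra. }
  destruct (HX p q) as [Hd [Hc [Hp Hn]]].
  set (lam := omega * (INR p - INR q)) in *.
  destruct (Rlt_le_dec 0 lam) as [Hl|Hl].
  - assert (Hlo : omega <= lam).
    { unfold lam. assert (H1 : INR q < INR p) by (unfold lam in Hl; nra).
      apply INR_lt in H1. apply le_INR in H1. rewrite S_INR in H1. nra. }
    eapply Rle_trans. apply (ode_pos (F p q) (X p q) lam M Hl HM); auto.
    intros s Hs. eapply Rle_trans. apply Hf; auto.
    assert (exp (- a * s) <= 1) by (rewrite <- exp_0; apply exp_le_mono; nra). nra.
    apply Rle_trans with (M / omega). apply div_le_div; auto; lra. apply div_le_div; auto; nra.
  - eapply Rle_trans. apply (ode_nonpos (F p q) (X p q) lam a M Hl ltac:(lra) HM (HFc p q) Hf Hd Hc (Hn Hl) t Ht).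
    apply Rle_trans with (M / a). apply div_le_div; auto; lra. apply div_le_div; auto; nra.
Qed.

Theorem lemma3 (omega a Rs eps_j d_j R_j : R) (F X : series) :
  0 < omega <= 1 -> 0 < a <= 1 -> 0 < Rs ->
  0 < eps_j -> 0 < d_j <= 1/4 -> Rs < R_j <= 1 ->
  coeffs_continuous F ->
  (forall t, 0 <= t -> normle F R_j (eps_j * exp (- a * t)) t) ->
  4 * exp 2 * eps_j / (omega * a * Rs ^ 2 * d_j ^ 6) <= 1/2 ->
  is_gen_fun omega F X ->
  exists G : series,
    (forall p q t, 0 <= t ->
       infinite_sum
         (fun s => INR (S s) / INR (fact (S (S s))) * Lchi_pow X (S s) F p q t)
         (G p q t)) /\
    (forall t, 0 <= t ->
       normle G ((1 - 2 * d_j) * R_j)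
         (8 * exp 2 * eps_j ^ 2 / (omega * a * Rs ^ 2 * d_j ^ 6) * exp (- a * t)) t).
Proof.
  intros Ho Ha HRs He Hd HR HFc HF Hsmall HX.
  set (R := R_j) in *. set (d := d_j) in *.
  set (C := eps_j / (omega * a)).
  assert (Hoa : 0 < omega * a) by (apply Rmult_lt_0_compat; lra).
  assert (HC : 0 <= C) by (apply Rlt_le, Rdiv_lt_0_compat; lra).
  assert (HR0 : 0 < R) by lra.
  assert (HXc := X_coef omega a eps_j R F X Ho Ha He HR0 HFc HF HX).
  set (D := C * / R * (/ d * / d * / d)).
  set (E := exp 1).
  assert (HE : 2 <= E) by (unfold E; assert (H := exp_ineq1_le 1); lra).
  assert (Hw : 4 <= / d).
  { replace 4 with (/ (1/4)) by field. apply Rinv_le_contravar; lra. }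
  assert (Hu : 0 < / R) by (apply Rinv_0_lt_compat; lra).
  assert (Huv : / R <= / Rs) by (apply Rinv_le_contravar; lra).
  assert (HD : 0 <= D).
  { unfold D. apply Rmult_le_pos; [apply Rmult_le_pos; lra|]. repeat apply Rmult_le_pos; lra. }
  set (th := E * (2 * D / ((1 - d) * R - (1 - 2 * d) * R))).
  assert (Hth_eq : th = 2 * E * C * (/ R * / R) * (/ d * / d * / d * / d)).
  { unfold th, D. replace ((1 - d) * R - (1 - 2 * d) * R) with (d * R) by ring.
    assert (d <> 0) by lra. assert (R <> 0) by lra. field; auto. }
  assert (Hexp2 : exp 2 = E * E) by (unfold E; rewrite <- exp_plus; f_equal; ring).
  assert (HQ : 4 * exp 2 * eps_j / (omega * a * Rs ^ 2 * d_j ^ 6) =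
     4 * (E * E) * C * (/ Rs * / Rs) * (/ d * / d * / d * / d * / d * / d)).
  { rewrite Hexp2. unfold C, d. assert (omega <> 0) by lra. assert (a <> 0) by lra. assert (Rs <> 0) by lra.
    assert (d_j <> 0) by (unfold d in Hd; lra). field; repeat split; auto. }
  set (w := / d) in *. set (u := / R) in *. set (v := / Rs) in *.
  assert (Hw2 : w * w * w * w <= w * w * w * w * w * w).
  { assert (1 <= w * w) by nra. assert (0 <= w * w * w * w) by nra. nra. }
  assert (Huv2 : u * u <= v * v) by nra.
  assert (HEE : 2 * E <= 4 * (E * E)) by nra.
  assert (Hth_le : th <= 4 * (E * E) * C * (v * v) * (w * w * w * w * w * w)).
  { rewrite Hth_eq.
    apply Rle_trans with (4 * (E * E) * C * (u * u) * (w * w * w * w)).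
    - apply Rmult_le_compat_r; [nra|]. apply Rmult_le_compat_r; [nra|]. apply Rmult_le_compat_r; [lra|]. exact HEE.
    - assert (0 <= 4 * (E * E) * C) by (apply Rmult_le_pos; nra).
      apply Rmult_le_compat. nra. nra.
      apply Rmult_le_compat_l; auto. auto. }
  assert (Hs2 : 4 * (E * E) * C * (v * v) * (w * w * w * w * w * w) <= 1 / 2) by (rewrite <- HQ; exact Hsmall).
  assert (Hth2 : th <= 1 / 2) by lra.
  exists (lie X F).
  assert (Main : forall t, 0 <= t ->
    (forall p q, infinite_sum (lieterm X F p q t) (lie X F p q t)) /\
    bnd (lie X F) ((1 - 2 * d) * R) t ((eps_j * exp (- a * t) * (w * w)) * (2 * th))).
  { intros t Ht. unfold th. apply lie_main; auto.
    - split. apply Rmult_lt_0_compat; lra. nra.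
    - apply Rmult_le_pos. apply Rmult_le_pos. lra. apply Rlt_le, exp_pos. nra.
    - fold th. auto.
    - intros rho Hrho.
      replace rho with ((rho / R) * R) by (field; lra).
      eapply bnd_weaken; [|apply bnd_of_coef]; auto.
      + assert (Hy : / (1 - rho / R) <= w).
        { unfold w. apply Rinv_le_contravar. lra. apply Rmult_le_reg_r with R; auto.
          replace ((1 - rho / R) * R) with (R - rho) by (field; lra). nra. }
        assert (0 <= / (1 - rho / R)).
        { apply Rlt_le, Rinv_0_lt_compat. apply Rmult_lt_reg_r with R; auto.
          replace ((1 - rho / R) * R) with (R - rho) by (field; lra). nra. }
        apply Rmult_le_compat_l. apply Rmult_le_pos. lra. apply Rlt_le, exp_pos.
        apply Rmult_le_compat; auto.
      + split. apply Rmult_le_pos. lra. apply Rlt_le, Rinv_0_lt_compat; lra.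
        apply Rmult_lt_reg_r with R; auto. replace (rho / R * R) with rho by (field; lra). nra.
      + apply Rmult_le_pos. lra. apply Rlt_le, exp_pos.
      + intros p q. apply coef_of_normle. lra. apply HF; auto.
    - intros rho Hrho.
      replace rho with ((rho / R) * R) by (field; lra).
      assert (Hy0 : 0 <= rho / R < 1).
      { split. apply Rmult_le_pos. lra. apply Rlt_le, Rinv_0_lt_compat; lra.
        apply Rmult_lt_reg_r with R; auto. replace (rho / R * R) with rho by (field; lra). nra. }
      assert (Hy : / (1 - rho / R) <= w).
      { unfold w. apply Rinv_le_contravar. lra. apply Rmult_le_reg_r with R; auto.
        replace ((1 - rho / R) * R) with (R - rho) by (field; lra). nra. }
      assert (0 <= / (1 - rho / R)) by (apply Rlt_le, Rinv_0_lt_compat; lra).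
      assert (HDle : C * / R * (/ (1 - rho / R) * / (1 - rho / R) * / (1 - rho / R)) <= D).
      { unfold D. fold u. fold w. apply Rmult_le_compat_l. nra.
        apply Rmult_le_compat. nra. lra. apply Rmult_le_compat; nra. auto. }
      split; (eapply bnd_weaken; [apply HDle|]).
      + apply bnd_dPX; [lra|lra|lra|intros; apply HXc; lra].
      + apply bnd_dQX; [lra|lra|lra|intros; apply HXc; lra]. }
  split.
  - intros p q t Ht. apply (Main t Ht).
  - intros t Ht. apply normle_of_bnd. nra.
    eapply bnd_weaken; [|apply (Main t Ht)].
    set (K := eps_j * exp (- a * t)).
    assert (HK : 0 <= K) by (unfold K; apply Rmult_le_pos; [lra| apply Rlt_le, exp_pos]).
    rewrite Hth_eq. apply Rle_trans with ((K * C * (w * w * w * w * w * w)) * (8 * (E * E) * (v * v))).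
    + replace (K * (w * w) * (2 * (2 * E * C * (u * u) * (w * w * w * w)))) with
        ((K * C * (w * w * w * w * w * w)) * (4 * E * (u * u))) by ring.
      apply Rmult_le_compat_l. apply Rmult_le_pos. apply Rmult_le_pos; auto. nra.
      apply Rmult_le_compat; nra.
    + right. unfold K, C, v, w, d. rewrite Hexp2. assert (omega <> 0) by lra. assert (a <> 0) by lra.
      assert (Rs <> 0) by lra. assert (d_j <> 0) by (unfold d in Hd; lra). field; repeat split; auto.
Qed.
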